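(* For every $n\ge1$, $|\mathcal{T}_n^{(1,n)}|=1$, and for $n\ge2$ and $1\le p\le n-1$, $|\mathcal{T}_n^{(1,p)}|=\sum_{r=1}^{n}|\mathcal{T}_{n-1}^{(r,p)}|$.
   Context: For $m\ge1$, $1\le p\le m$: sites are $0,\dots,m+1$; a configuration in $\mathcal{S}(m,p)$ places $m+1$ distinct chips labeled $1,\dots,m+1$ with sites $0,m+1$ empty, one chip at each site of $\{1,\dots,m\}\setminus\{p\}$ and two chips at site $p$. Toppling: while some site holds at least two chips, choose such a site $i$ and two chips $\alpha<\beta$ there and move $\alpha$ to $i-1$, $\beta$ to $i+1$; it is known this terminates with at most one chip per site and the final configuration is independent of the choices. For $\pi\in S_m$ and $r\in[m+1]$, $\pi^{(r,p)}$ places at site $i$ ($1\le i\le m$) chip $\pi_i$ if $\pi_i<r$ and $\pi_i+1$ otherwise, plus chip $r$ at site $p$. $\mathcal{T}_m^{(r,p)}$ is the set of $\pi\in S_m$ such that the final configuration of $\pi^{(r,p)}$, read left to right, is $1,2,\dots,m+1$. *)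

(* Defs.v *)
From mathcomp Require Import all_boot all_order all_algebra all_fingroup.
From mathcomp Require Import boolp.
From Stdlib Require Import Relations.
Set Implicit Arguments. Unset Strict Implicit. Unset Printing Implicit Defensive.
Import Order.TTheory GRing.Theory Num.Theory.
Local Open Scope ring_scope.

(* A configuration of the m+1 labelled chips 1,...,m+1 is encoded by the
   sequence  s  of their sites (integers): s`_k is the site of chip k+1.
   Sites are taken in int so that no boundary condition is imposed. *)
Definition config := seq int.

Definition topple (s s' : config) : Prop :=
  exists a b : nat, [/\ (a < b)%N, (b < size s)%N, s`_a = s`_b &
    s' = set_nth 0 (set_nth 0 s a (s`_a - 1)) b (s`_a + 1)].

Definition reach : config -> config -> Prop := clos_refl_trans config topple.

Definition stable (s : config) : bool := uniq s.

(* the stable configuration, read left to right, is 1,2,...,|s|: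
   chip k+1 sits strictly left of chip k+2 for all k *)
Definition reads_identity (s : config) : bool := sorted <%R s.

(* label placed at site i+1 (i : 'I_m) in pi^(r,p): pi_{i+1} if pi_{i+1} < r,
   pi_{i+1}+1 otherwise (pi_{i+1} = val (pi i) + 1 in 1-based notation) *)
Definition chip_at (m : nat) (pi : 'S_m) (r : nat) (i : 'I_m) : nat :=
  let v := (pi i).+1 in if (v < r)%N then v else v.+1.

(* The configuration pi^(r,p): chip r at site p, and at each site i in
   {1..m} the chip chip_at pi r (i-1). *)
Definition init_config (m : nat) (pi : 'S_m) (r p : nat) : config :=
  let L := [seq chip_at pi r i | i <- enum 'I_m] in
  [seq (if c == r then (p%:Z) else ((index c L).+1)%:Z) | c <- iota 1 m.+1].

(* The final configuration of c (unique by the known confluence result) is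
   read as 1,...,m+1. *)
Definition final_is_identity (c : config) : Prop :=
  exists c', reach c c' /\ stable c' /\ reads_identity c'.

Definition Tset (m r p : nat) : {set 'S_m} :=
  [set pi : 'S_m | `[< final_is_identity (init_config pi r p) >]].

(* Main.v *)
Require Import Defs.
From mathcomp Require Import all_boot all_order all_algebra all_fingroup.
From mathcomp Require Import boolp.
From Stdlib Require Import Relations.
From mathcomp Require Import zify.
Set Implicit Arguments. Unset Strict Implicit. Unset Printing Implicit Defensive.
Import Order.TTheory GRing.Theory Num.Theory.
Local Open Scope ring_scope.


Definition tp (s : config) (a b : nat) : config :=
  set_nth 0 (set_nth 0 s a (s`_a - 1)) b (s`_a + 1).

Lemma size_tp s a b : (a < b)%N -> (b < size s)%N -> size (tp s a b) = size s.
Proof. move=> ab bs; rewrite /tp !size_set_nth; lia. Qed.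

Lemma nth_tp s a b k : (a < b)%N -> (b < size s)%N ->
  (tp s a b)`_k = if k == b then s`_a + 1 else if k == a then s`_a - 1 else s`_k.
Proof.
move=> ab bs; rewrite /tp !nth_set_nth /=.
by rewrite nth_set_nth.
Qed.

Lemma toppleE s t : topple s t <->
  exists a b, [/\ (a < b)%N, (b < size s)%N, s`_a = s`_b & t = tp s a b].
Proof. by []. Qed.

Lemma nth_count (P : pred int) (s : config) k : (k < size s)%N -> (P (s`_k)%R <= count P s)%N.
Proof.
elim: s k => [|x s IH] [|k] //= => [_|]; first exact: leq_addr.
by move=> /IH h; apply: leq_trans h (leq_addl _ _).
Qed.

Lemma topple_count s a b (P : pred int) : (a < b)%N -> (b < size s)%N -> s`_a = s`_b ->
  (count P (tp s a b) + P (s`_a)%R + P (s`_a)%R = count P s + P (s`_a - 1)%R + P (s`_a + 1)%R)%N.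
Proof.
move=> ab bs eab; rewrite /tp.
have aS : (a < size s)%N by exact: ltn_trans ab bs.
set s1 := set_nth 0 s a (s`_a - 1).
have ss1 : size s1 = size s by rewrite size_set_nth; lia.
have n1 : s1`_b = s`_a by rewrite nth_set_nth /= ifN ?eab //; apply/eqP; lia.
have bS1 : (b < size s1)%N by rewrite ss1.
rewrite count_set_nth_ltn // n1.
have h1 : (P (s1`_b)%R <= count P s1)%N by apply: nth_count.
rewrite n1 in h1.
have e1 : count P s1 = (count P s + P (s`_a - 1)%R - P (s`_a)%R)%N by rewrite /s1 count_set_nth_ltn.
have h2 : (P (s`_a)%R <= count P s)%N by apply: nth_count.
rewrite e1 in h1 *.
lia.
Qed.


Definition cnt (s : config) (x : int) : nat := count (pred1 x) s.

Lemma neqF (x y : int) : x <> y -> (x == y) = false.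
Proof. by move/eqP/negbTE. Qed.

Lemma cnt_tp s a b (v : int) : (a < b)%N -> (b < size s)%N -> s`_a = s`_b ->
  v = s`_a -> 
  [/\ (cnt (tp s a b) v + 2 = cnt s v)%N, cnt (tp s a b) (v - 1) = (cnt s (v - 1)).+1,
      cnt (tp s a b) (v + 1) = (cnt s (v + 1)).+1 &
      forall x, x <> v -> x <> v - 1 -> x <> v + 1 -> cnt (tp s a b) x = cnt s x].
Proof.
move=> ab bs eab ev.
have H x := topple_count (pred1 x) ab bs eab.
rewrite -ev in H.
rewrite /cnt; split.
- have := H v; rewrite /= eqxx !neqF; [|lia| lia].
  change (nat_of_bool true) with 1%N; change (nat_of_bool false) with 0%N; lia.
- have := H (v - 1); rewrite /= eqxx !neqF; [|lia| lia].
  change (nat_of_bool true) with 1%N; change (nat_of_bool false) with 0%N; lia.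
- have := H (v + 1); rewrite /= eqxx !neqF; [|lia| lia].
  change (nat_of_bool true) with 1%N; change (nat_of_bool false) with 0%N; lia.
- move=> x h1 h2 h3; have := H x; rewrite /= !neqF; [|lia|lia|lia].
  change (nat_of_bool false) with 0%N; lia.
Qed.

Definition Inv (s : config) :=
  (forall x, (cnt s x <= 2)%N) /\
  (forall x y, x < y -> cnt s x = 2%N -> cnt s y = 2%N ->
     exists z, x < z < y /\ cnt s z = 0%N).

Lemma Inv_tp s a b : Inv s -> (a < b)%N -> (b < size s)%N -> s`_a = s`_b ->
  Inv (tp s a b).
Proof.
move=> [Hle Hsep] ab bs eab.
have [H0 Hm Hp Ho] := cnt_tp ab bs eab (erefl (s`_a)).
move: H0 Hm Hp Ho; set v := s`_a; set t := tp s a b => H0 Hm Hp Ho.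
have cv : cnt s v = 2%N by have := Hle v; lia.
have np : (cnt s (v + 1) <= 1)%N.
  case: (leqP (cnt s (v + 1)) 1) => // h.
  have [z [hz _]] : exists z, v < z < v + 1 /\ cnt s z = 0%N.
    by apply: Hsep; [lia | done | have := Hle (v + 1); lia].
  lia.
have nm : (cnt s (v - 1) <= 1)%N.
  case: (leqP (cnt s (v - 1)) 1) => // h.
  have [z [hz _]] : exists z, v - 1 < z < v /\ cnt s z = 0%N.
    by apply: Hsep; [lia | have := Hle (v - 1); lia | done].
  lia.
have tv : cnt t v = 0%N by lia.
have cE x : cnt t x = if x == v then 0%N else if x == v - 1 then (cnt s x).+1
            else if x == v + 1 then (cnt s x).+1 else cnt s x.
  case: (x =P v) => [->//|h1]; case: (x =P (v - 1)) => [->//|h2].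
  by case: (x =P (v + 1)) => [->//|h3]; rewrite Ho.
split.
- move=> x; rewrite cE.
  case: (x =P v) => // h1; case: (x =P (v - 1)) => [->|h2]; first lia.
  case: (x =P (v + 1)) => [->|h3]; first lia.
  exact: Hle.
- move=> x y xy.
  case: (x =P v) => [->|xv]; first by rewrite tv.
  case: (y =P v) => [->|yv]; first by rewrite tv.
  case: (ltrP x v) => xlv.
  + case: (ltrP v y) => vy.
      by move=> _ _; exists v; split => //; lia.
    have yv1 : y < v by lia.
    case: (y =P (v - 1)) => [ye|yne].
    * move=> cx cy.
      have cx' : cnt s x = 2%N.
        by move: cx; rewrite cE ifN ?ifN ?ifN; [done|apply/eqP; lia|apply/eqP; lia|apply/eqP; lia].
      have [z [hz cz]] := Hsep x v xlv cx' cv.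
      have zy : z <> v - 1 by move=> ez; move: cz cy; rewrite ez ye Hm => ->.
      exists z; split; first lia.
      by rewrite Ho //; lia.
    * move=> cx cy.
      have cx' : cnt s x = 2%N.
        by move: cx; rewrite cE ifN ?ifN ?ifN; [done|apply/eqP; lia|apply/eqP; lia|apply/eqP; lia].
      have cy' : cnt s y = 2%N.
        by move: cy; rewrite cE ifN ?ifN ?ifN; [done|apply/eqP; lia|apply/eqP; lia|apply/eqP; lia].
      have [z [hz cz]] := Hsep x y xy cx' cy'.
      exists z; split => //; rewrite Ho //; lia.
  + have xv1 : v < x by lia.
    have vy : v < y by lia.
    case: (x =P (v + 1)) => [xe|xne].
    * move=> cx cy.
      have cy' : cnt s y = 2%N.
        by move: cy; rewrite cE ifN ?ifN ?ifN; [done|apply/eqP; lia|apply/eqP; lia|apply/eqP; lia].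
      have [z [hz cz]] := Hsep v y vy cv cy'.
      have zx : z <> v + 1 by move=> ez; move: cz cx; rewrite ez xe Hp => ->.
      exists z; split; first lia.
      by rewrite Ho //; lia.
    * move=> cx cy.
      have cx' : cnt s x = 2%N.
        by move: cx; rewrite cE ifN ?ifN ?ifN; [done|apply/eqP; lia|apply/eqP; lia|apply/eqP; lia].
      have cy' : cnt s y = 2%N.
        by move: cy; rewrite cE ifN ?ifN ?ifN; [done|apply/eqP; lia|apply/eqP; lia|apply/eqP; lia].
      have [z [hz cz]] := Hsep x y xy cx' cy'.
      exists z; split => //; rewrite Ho //; lia.
Qed.


Lemma three_le s v i j k : i <> j -> i <> k -> j <> k ->
  (i < size s)%N -> (j < size s)%N -> (k < size s)%N ->
  s`_i = v -> s`_j = v -> s`_k = v -> (3 <= cnt s v)%N.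
Proof.
move=> ij ik jk iS js ks ei ej ek.
set s1 := set_nth 0 s i (v + 1).
set s2 := set_nth 0 s1 j (v + 1).
have ss1 : size s1 = size s by rewrite size_set_nth; lia.
have ss2 : size s2 = size s by rewrite size_set_nth ss1; lia.
have n1 : s1`_j = v by rewrite nth_set_nth /= ifN //; apply/eqP; lia.
have n2 : s2`_k = v by rewrite nth_set_nth /= ifN ?nth_set_nth /= ?ifN //; apply/eqP; lia.
have c1 : cnt s1 v = (cnt s v + ((v + 1)%R == v) - ((s`_i)%R == v))%N by rewrite /cnt count_set_nth_ltn.
have c2 : cnt s2 v = (cnt s1 v + ((v + 1)%R == v) - ((s1`_j)%R == v))%N by rewrite /cnt count_set_nth_ltn // ss1.
rewrite ei n1 eqxx neqF in c1 c2; last by lia.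
have h0 : (1 <= cnt s v)%N.
  by have := nth_count (pred1 v) iS; rewrite /= ei eqxx.
have h2 : (1 <= cnt s2 v)%N.
  by have := nth_count (pred1 v) (_ : (k < size s2)%N); rewrite /= n2 eqxx; apply; rewrite ss2.
move: c1 c2 h0 h2; rewrite /=.
change (nat_of_bool true) with 1%N; change (nat_of_bool false) with 0%N.
move=> -> ->; lia.
Qed.

Lemma comm_tp s a b c d : (a < b)%N -> (b < size s)%N -> (c < d)%N -> (d < size s)%N ->
  a <> c -> a <> d -> b <> c -> b <> d ->
  tp (tp s a b) c d = tp (tp s c d) a b.
Proof.
move=> ab bs cd ds ac ad bc bd.
have s1 : size (tp s a b) = size s by rewrite size_tp.
have s2 : size (tp s c d) = size s by rewrite size_tp.
apply: (@eq_from_nth _ 0).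
  by rewrite !size_tp ?s1 ?s2.
move=> k _.
rewrite nth_tp ?s1 // nth_tp ?s2 // !nth_tp //.
have -> : (c == b) = false by apply/eqP; lia.
have -> : (c == a) = false by apply/eqP; lia.
have -> : (a == d) = false by apply/eqP; lia.
have -> : (a == c) = false by apply/eqP; lia.
case: (k =P d) => [->|kd].
  by rewrite ifN ?ifN //; apply/eqP; lia.
case: (k =P c) => [->|kc].
  by rewrite ifN ?ifN //; apply/eqP; lia.
done. by rewrite s2.
Qed.

Lemma diamond s t1 t2 : Inv s -> topple s t1 -> topple s t2 ->
  t1 = t2 \/ exists u, topple t1 u /\ topple t2 u.
Proof.
move=> [Hle _] [a [b [ab bs eab ->]]] [c [d [cd ds ecd ->]]].
case: (s`_a =P s`_c) => [e|ne].
- left.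
  have H3 k : (k < size s)%N -> s`_k = s`_a -> k = a \/ k = b.
    move=> ks ek; case: (k =P a) => [|na]; [by left|right].
    case: (k =P b) => // nb; exfalso.
    have := @three_le s (s`_a) a b k ltac:(lia) (nesym na) (nesym nb)
      (ltn_trans ab bs) bs ks erefl (esym eab) ek.
    move=> h; by have := leq_trans h (Hle _).
  have cS : (c < size s)%N by exact: ltn_trans cd ds.
  have [hd|hd] := H3 d ds (etrans (esym ecd) (esym e));
  have [hc|hc] := H3 c cS (esym e); subst; try lia; by [].
- right; exists (tp (tp s a b) c d).
  have ac : a <> c by move=> h; apply: ne; rewrite h.
  have ad : a <> d by move=> h; apply: ne; rewrite h ecd.
  have bc : b <> c by move=> h; apply: ne; rewrite eab h.
  have bd : b <> d by move=> h; apply: ne; rewrite eab h ecd.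
  split.
  + exists c, d; split => //; first by rewrite size_tp.
    rewrite !nth_tp // ifN ?ifN ?ifN ?ifN //; apply/eqP; lia.
  + rewrite comm_tp //; exists a, b; split => //; first by rewrite size_tp.
    rewrite !nth_tp // ifN ?ifN ?ifN ?ifN //; apply/eqP; lia.
Qed.

Lemma Inv_topple s t : Inv s -> topple s t -> Inv t.
Proof. by move=> I [a [b [ab bs eab ->]]]; apply: Inv_tp. Qed.

Lemma Inv_reach s t : Inv s -> reach s t -> Inv t.
Proof.
move=> I H; revert I; induction H as [x y h|x|x y z _ IH1 _ IH2] => I.
- exact: Inv_topple I h.
- exact: I.
- exact: IH2 (IH1 I).
Qed.

Lemma semi s x y : Inv s -> reach s x -> (s = y \/ topple s y) ->
  exists z, (x = z \/ topple x z) /\ reach y z.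
Proof.
move=> I sx; have H := clos_rt_rt1n _ _ _ _ sx; clear sx.
revert y I; induction H as [s0|s0 t x0 st tx IH] => y I.
  by move=> h; exists y; split; [exact: h|apply: rt_refl].
move=> [ey|sy].
  subst y; exists x0; split; first by left.
  by apply: rt_trans (rt_step _ _ _ _ st) _; exact: clos_rt1n_rt tx.
have [ety|[u [tu yu]]] := diamond I st sy.
  by exists x0; split; [left|rewrite -ety; exact: clos_rt1n_rt tx].
have [z [xz uz]] := IH u (Inv_topple I st) (or_intror tu).
by exists z; split => //; apply: rt_trans (rt_step _ _ _ _ yu) uz.
Qed.

Lemma confl s x y : Inv s -> reach s x -> reach s y ->
  exists z, reach x z /\ reach y z.
Proof.
move=> I sx sy; have H := clos_rt_rt1n _ _ _ _ sy; clear sy.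
revert x I sx; induction H as [s0|s0 t y0 st _ IH] => x I sx.
  by exists x; split; [apply: rt_refl|].
have [z1 [xz1 tz1]] := semi I sx (or_intror st).
have [z [z1z y0z]] := IH z1 (Inv_topple I st) tz1.
exists z; split => //.
case: xz1 => [->//|xz1]; exact: rt_trans (rt_step _ _ _ _ xz1) z1z.
Qed.

Lemma stable_no_topple x y : stable x -> ~ topple x y.
Proof.
move=> u [a [b [ab bs eab _]]].
have := nth_uniq 0 (ltn_trans ab bs) bs u; rewrite eab eqxx => /esym/eqP h.
by move: ab; rewrite h ltnn.
Qed.

Lemma stable_reach x z : stable x -> reach x z -> z = x.
Proof.
move=> sx xz; have H := clos_rt_rt1n _ _ _ _ xz; clear xz.
case: H sx => // y0 z0 h _ sx; by case: (stable_no_topple sx h).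
Qed.

Lemma final_unique s x y : Inv s -> reach s x -> reach s y -> stable x -> stable y -> x = y.
Proof.
move=> I sx sy stx sty.
have [z [xz yz]] := confl I sx sy.
by rewrite -(stable_reach stx xz) (stable_reach sty yz).
Qed.


Definition ltk (k : nat) : pred int := fun y => (y < k%:Z)%R.
Definition Bnd (s : config) := forall k : nat, (count (ltk k) s <= k)%N.

Lemma count_split (s : config) (k : nat) :
  count (ltk k.+1) s = (count (ltk k) s + cnt s k%:Z)%N.
Proof.
rewrite /cnt -count_predUI.
have -> : count (predI (ltk k) (pred1 k%:Z)) s = 0%N.
  rewrite (@eq_count _ _ pred0) ?count_pred0 // => y /=.
  by apply/negbTE/negP => /andP [h /eqP e]; move: h; rewrite /ltk e ltxx.
rewrite addn0; apply: eq_count => y /=; rewrite /ltk.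
by apply/idP/orP => [h|[h|/eqP h]]; [case: (y =P k%:Z) => e; [right; apply/eqP|left] | |]; lia.
Qed.

Lemma Bnd_tp s a b : Bnd s -> (a < b)%N -> (b < size s)%N -> s`_a = s`_b -> Bnd (tp s a b).
Proof.
move=> B ab bs eab k.
have := topple_count (ltk k) ab bs eab.
have [H0 _ _ _] := cnt_tp ab bs eab (erefl (s`_a)).
move: H0; rewrite /ltk; set v := s`_a => H0 /=.
have Bk := B k; have Bk1 := B k.+1; rewrite count_split in Bk1.
move: Bk Bk1; rewrite /ltk => Bk Bk1.
have [h1|h1] := boolP (v - 1 < k%:Z); have [h2|h2] := boolP (v < k%:Z);
have [h3|h3] := boolP (v + 1 < k%:Z);
rewrite ?h1 ?h2 ?h3 ?(negbTE h1) ?(negbTE h2) ?(negbTE h3);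
change (nat_of_bool true) with 1%N; change (nat_of_bool false) with 0%N; try lia.
have ev : v = k%:Z by lia.
rewrite ev in H0; lia.
Qed.

Lemma Bnd_pos s : Bnd s -> forall y, y \in s -> 0 <= y.
Proof.
move=> B y ys.
have h : ~~ has (ltk 0) s by rewrite has_count -leqNgt B.
by move/hasPn: h => /(_ y ys); rewrite /ltk -leNgt.
Qed.

Definition shift (s : config) : config := 0 :: map (fun y => y + 1) s.

Lemma shift_tp s a b : (a < b)%N -> (b < size s)%N ->
  shift (tp s a b) = tp (shift s) a.+1 b.+1.
Proof.
move=> ab bs; have aS : (a < size s)%N by exact: ltn_trans ab bs.
rewrite /tp /shift /= (nth_map 0) //; congr (_ :: _).
apply: (@eq_from_nth _ 0).
  by rewrite size_map !size_set_nth size_map.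
move=> i; rewrite size_map !size_set_nth (maxn_idPr aS) (maxn_idPr bs) => iS.
rewrite (nth_map 0); last by rewrite !size_set_nth (maxn_idPr aS) (maxn_idPr bs).
rewrite !nth_set_nth /=.
case: (i =P b) => // _; rewrite !nth_set_nth /=; case: (i =P a) => _; first lia.
by rewrite (nth_map 0).
Qed.

Lemma topple_shift s t : topple s t -> topple (shift s) (shift t).
Proof.
move=> [a [b [ab bs eab ->]]]; exists a.+1, b.+1; split => //.
- by rewrite /= size_map.
- by rewrite /= !(nth_map 0) ?eab //; exact: ltn_trans ab bs.
- by rewrite -/(tp s a b) shift_tp.
Qed.

Lemma reach_shift s t : reach s t -> reach (shift s) (shift t).
Proof.
move=> H; induction H as [x y h|x|x y z _ IH1 _ IH2].
- exact/rt_step/topple_shift.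
- exact: rt_refl.
- exact: rt_trans IH1 IH2.
Qed.

Lemma unshift s T : Bnd s -> topple (shift s) T -> exists t, topple s t /\ T = shift t.
Proof.
move=> B [a [b [ab bs eab ->]]].
case: b ab bs eab => // b ab; rewrite /= size_map ltnS => bs.
case: a ab => [|a] ab eab.
  move: eab; rewrite /= (nth_map 0) //.
  move: (Bnd_pos B (mem_nth 0 bs)); move: (s`_b) => y; lia.
have aS : (a < size s)%N by apply: ltn_trans _ bs.
move: eab; rewrite /= !(nth_map 0) //.
move=> eab; have eab' : s`_a = s`_b by lia.
exists (tp s a b); split; first by exists a, b.
by rewrite shift_tp // /tp /= (nth_map 0).
Qed.

Lemma reach_unshift s Y : Bnd s -> reach (shift s) Y -> exists X, reach s X /\ Y = shift X.
Proof.
move=> B H; have H1 := clos_rt_rt1n _ _ _ _ H; clear H.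
remember (shift s) as Z eqn:EZ.
revert s EZ B; induction H1 as [Z|Z T Y st _ IH] => s EZ B.
  by exists s; split => //; apply: rt_refl.
subst Z; have [t [st' eT]] := unshift B st; subst T.
have Bt : Bnd t by case: st' => [a [b [ab bs eab ->]]]; apply: Bnd_tp.
have [X [tX ->]] := IH t erefl Bt.
by exists X; split => //; apply: rt_trans (rt_step _ _ _ _ st') tX.
Qed.


Definition wf (p x : nat) (q : int) : int :=
  if (x%:Z < q) && (q <= p%:Z) then q + 1 else q.
Definition stateW (p : nat) (t : config) (x : nat) : config := x%:Z :: map (wf p x) t.

Lemma wave_step p t x : uniq t -> (x < p)%N -> (x.+1)%:Z \in t ->
  topple (stateW p t x.+1) (stateW p t x).
Proof.
move=> ut xp xt.
set idx := index (x.+1)%:Z t.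
have hi : (idx < size t)%N by rewrite index_mem.
have ni : t`_idx = (x.+1)%:Z by rewrite nth_index.
exists 0%N, idx.+1; split => //.
- by rewrite /= size_map.
- rewrite /= (nth_map 0) // ni /wf.
  by rewrite ifN //; apply/negP => /andP [h _]; move: h; rewrite ltxx.
- rewrite /tp /= /stateW; congr (_ :: _).
    lia.
  apply: (@eq_from_nth _ 0).
    by rewrite size_set_nth !size_map (maxn_idPr hi).
  move=> i; rewrite size_map => iS.
  rewrite nth_set_nth /= !(nth_map 0) //.
  case: (i =P idx) => [->|ne].
    by rewrite ni /wf ifT //; apply/andP; split; lia.
  have nx : t`_i != (x.+1)%:Z.
    apply/eqP => e; apply: ne; rewrite /idx -e index_uniq //.
  rewrite /wf; move: nx; move: (t`_i) => q /eqP nq.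
  have [h|h] := boolP ((x%:Z < q) && (q <= p%:Z));
  have [h'|h'] := boolP (((x.+1)%:Z < q) && (q <= p%:Z)); rewrite ?h ?h' //.
  + by move/negP: h'; case; move/andP: h => [h1 h2]; apply/andP; lia.
  + by move/negP: h; case; move/andP: h' => [h1 h2]; apply/andP; lia.
Qed.

Lemma stateW_p p t : stateW p t p = p%:Z :: t.
Proof.
rewrite /stateW; congr (_ :: _); rewrite -[RHS]map_id; apply: eq_map => q.
by rewrite /wf ifN //; apply/negP => /andP [h1 h2]; lia.
Qed.

Lemma wave p t : uniq t -> (forall k : nat, (1 <= k <= p)%N -> k%:Z \in t) ->
  reach (p%:Z :: t) (stateW p t 0).
Proof.
move=> ut ht; rewrite -stateW_p.
suff H k : (k <= p)%N -> reach (stateW p t p) (stateW p t (p - k)).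
  by have := H p (leqnn p); rewrite subnn.
elim: k => [|k IH] hk; first by rewrite subn0; apply: rt_refl.
apply: rt_trans (IH (ltnW hk)) _.
have e : (p - k = (p - k.+1).+1)%N by lia.
rewrite e; apply: rt_step; apply: wave_step => //; first lia.
by rewrite -e; apply: ht; lia.
Qed.


Section Init.
Variables (m : nat) (pi : 'S_m) (r p : nat).

Lemma chip_at_neq i : chip_at pi r i != r.
Proof. rewrite /chip_at; case: ifP => h; apply/eqP; lia. Qed.

Lemma chip_at_inj : injective (chip_at pi r).
Proof.
move=> i i'; rewrite /chip_at => h.
apply: (@perm_inj _ pi); apply: val_inj => /=.
by move: h; case: ifP => h1; case: ifP => h2; lia.
Qed.

Lemma chip_at_bnd i : (1 <= chip_at pi r i <= m.+1)%N.
Proof. have := ltn_ord (pi i); rewrite /chip_at; case: ifP => h; lia. Qed.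

Definition Lc := [seq chip_at pi r i | i <- enum 'I_m].
Definition gc (c : nat) : int :=
  if c == r then p%:Z else ((index c Lc).+1)%:Z.

Lemma initE : init_config pi r p = map gc (iota 1 m.+1).
Proof. by []. Qed.

Lemma size_init : size (init_config pi r p) = m.+1.
Proof. by rewrite initE size_map size_iota. Qed.

Lemma gc_chip i : gc (chip_at pi r i) = (i.+1)%:Z.
Proof.
rewrite /gc ifN ?chip_at_neq //; congr (Posz _.+1).
by rewrite /Lc index_map ?index_enum_ord //; apply: chip_at_inj.
Qed.

Lemma nth_init_chip i : (init_config pi r p)`_(chip_at pi r i).-1 = (i.+1)%:Z.
Proof.
have := chip_at_bnd i => hb.
rewrite initE (nth_map 0%N) ?size_iota; last by lia.
rewrite nth_iota; last by lia.
by rewrite add1n prednK ?gc_chip //; lia.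
Qed.

Lemma nth_init_r : (1 <= r <= m.+1)%N -> (init_config pi r p)`_r.-1 = p%:Z.
Proof.
move=> hr; rewrite initE (nth_map 0%N) ?size_iota; last by lia.
by rewrite nth_iota ?add1n ?prednK /gc ?eqxx //; lia.
Qed.

Definition useq (k : nat) : config := [seq (i.+1)%:Z | i <- iota 0 k].

Lemma perm_init : (1 <= r <= m.+1)%N -> perm_eq (init_config pi r p) (p%:Z :: useq m).
Proof.
move=> hr.
have P1 : perm_eq (iota 1 m.+1) (r :: Lc).
  apply: uniq_perm; first exact: iota_uniq.
    rewrite /= map_inj_uniq ?enum_uniq ?andbT; last exact: chip_at_inj.
    apply/mapP => [[i _ e]]; move: (chip_at_neq i); rewrite -e eqxx //.
  move=> c; rewrite in_cons mem_iota; apply/idP/orP.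
    move=> hc; have {hc} hc : (1 <= c <= m.+1)%N.
      by move: hc; case/orP => [/eqP ->|]; lia.
    case: (c =P r) => [->|ne]; first by left.
    right; apply/mapP.
    pose v := if (c < r)%N then c else c.-1.
    have hv : (v.-1 < m)%N by rewrite /v; case: ifP; lia.
    exists (perm_inv pi (Ordinal hv)); first by rewrite mem_enum.
    rewrite /chip_at permKV /= /v; case: (ltnP c r) => h.
      by rewrite prednK ?h //; lia.
    by rewrite prednK; [rewrite ifN; lia|lia].
  case=> [/eqP ->|/mapP [i _ ->]]; apply/orP; first by case: (r =P 1%N) => [->|]; [left|right]; lia.
  have := chip_at_bnd i; case: (chip_at pi r i =P 1%N) => [->|]; [left|right]; lia.
rewrite initE; apply: perm_trans (perm_map gc P1) _.
rewrite /= {1}/gc eqxx perm_cons /Lc /useq -map_comp -val_enum_ord -map_comp.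
have E : (gc \o chip_at pi r) =1 ((fun i : nat => (i.+1)%:Z) \o val) by move=> i; rewrite /= gc_chip.
by rewrite (eq_map E).
Qed.

End Init.

Lemma useq_uniq k : uniq (useq k).
Proof. rewrite map_inj_uniq ?iota_uniq // => x y [] //. Qed.

Lemma mem_useq k (y : int) : (y \in useq k) = (1 <= y <= k%:Z).
Proof.
apply/mapP/idP => [[i]|h]; first by rewrite mem_iota => hi ->; lia.
exists (`|y|%N.-1); first by rewrite mem_iota; lia.
lia.
Qed.

Lemma nth_useq k c : (c < k)%N -> (useq k)`_c = (c.+1)%:Z.
Proof. by move=> h; rewrite /useq (nth_map 0%N) ?size_iota // nth_iota. Qed.

Lemma size_useq k : size (useq k) = k.
Proof. by rewrite size_map size_iota. Qed.


Lemma Inv_perm s s' : perm_eq s s' -> Inv s' -> Inv s.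
Proof.
move=> /seq.permP P [H1 H2]; split; rewrite /cnt.
  by move=> x; rewrite P; apply: H1.
by move=> x y xy; rewrite !P => hx hy; have [z [hz cz]] := H2 x y xy hx hy; exists z; rewrite /cnt P.
Qed.

Lemma Bnd_perm s s' : perm_eq s s' -> Bnd s' -> Bnd s.
Proof. by move=> /seq.permP P B k; rewrite P. Qed.

Lemma Inv_pu (p : int) k : Inv (p :: useq k).
Proof.
have c1 x : (cnt (useq k) x <= 1)%N by rewrite /cnt count_uniq_mem ?useq_uniq //; case: (_ \in _).
split.
  move=> x; rewrite /cnt /=; have := c1 x; rewrite /cnt; case: (p == x) => /=; lia.
move=> x y xy; rewrite /cnt /=.
have := c1 x; have := c1 y; rewrite /cnt.
case: (p =P x) => [ex|nx]; case: (p =P y) => [ey|ny] /=; try lia.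
Qed.

Lemma Bnd_pu (p : nat) k : (1 <= p)%N -> Bnd (p%:Z :: useq k).
Proof.
move=> hp j; rewrite /=.
have H : (count (ltk j) (useq k) <= j.-1)%N.
  rewrite -size_filter.
  have -> : j.-1 = size [seq (i.+1)%:Z | i <- iota 0 j.-1] by rewrite size_map size_iota.
  apply: uniq_leq_size; first by rewrite filter_uniq ?useq_uniq.
  move=> y; rewrite mem_filter mem_useq /ltk => /andP [h1 h2].
  apply/mapP; exists (`|y|%N.-1); first by rewrite mem_iota; lia.
  lia.
have : (ltk j p%:Z) -> (1 < j)%N by rewrite /ltk; lia.
case: (ltk j p%:Z) => /= h; lia.
Qed.

Lemma Bnd_reach s t : Bnd s -> reach s t -> Bnd t.
Proof.
move=> I H; revert I; induction H as [x y h|x|x y z _ IH1 _ IH2] => I.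
- by case: h => [a [b [ab bs eab ->]]]; apply: Bnd_tp.
- exact: I.
- exact: IH2 (IH1 I).
Qed.


Lemma sorted_shift X : (forall y, y \in X -> 0 <= y) -> sorted <%R X -> sorted <%R (shift X).
Proof.
move=> hX sX; rewrite /shift /= (path_sortedE lt_trans); apply/andP; split.
  by apply/allP => y /mapP [x /hX hx ->]; lia.
by rewrite sorted_map; apply: sub_sorted sX => x y /=; lia.
Qed.

Lemma sorted_unshift X : sorted <%R (shift X) -> sorted <%R X.
Proof.
rewrite /shift /= => /path_sorted; rewrite sorted_map.
by apply: sub_sorted => x y /=; lia.
Qed.

Lemma uniq_shift X : (forall y, y \in X -> 0 <= y) -> uniq X -> uniq (shift X).
Proof.
move=> hX uX; rewrite /shift /= map_inj_uniq ?uX ?andbT; last by move=> x y /= h; lia.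
by apply/mapP => [[x /hX hx e]]; lia.
Qed.

Lemma uniq_unshift X : uniq (shift X) -> uniq X.
Proof. by rewrite /shift /= => /andP [_ /map_uniq]. Qed.

Lemma init_head n (pi : 'S_n) p :
  init_config pi 1 p = p%:Z :: behead (init_config pi 1 p).
Proof. by rewrite initE /= /gc eqxx. Qed.

Lemma chip_at1 n (pi : 'S_n) i : chip_at pi 1 i = (pi i).+2.
Proof. by rewrite /chip_at. Qed.

Lemma nth_t n (pi : 'S_n) p k :
  (behead (init_config pi 1 p))`_(pi k) = (k.+1)%:Z.
Proof. by rewrite nth_behead -(nth_init_chip pi 1 p k) chip_at1. Qed.

Lemma t_facts n (pi : 'S_n) p : let t := behead (init_config pi 1 p) in
  [/\ perm_eq t (useq n), uniq t, size t = n &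
     forall y, y \in t = (1 <= y <= n%:Z)].
Proof.
move=> t.
have P : perm_eq t (useq n).
  by rewrite -(perm_cons p%:Z) /t -init_head perm_init.
split => //; first by rewrite (perm_uniq P) useq_uniq.
  by rewrite (perm_size P) size_useq.
by move=> y; rewrite (perm_mem P) mem_useq.
Qed.

Lemma Tset_mem m r p (pi : 'S_m) :
  (pi \in Tset m r p) = `[< final_is_identity (init_config pi r p) >].
Proof. by rewrite inE. Qed.


Lemma wave_shift m p (p0 j : 'I_m.+1) (s : 'S_m) : val p0 = p ->
  stateW p (behead (init_config (lift_perm p0 j s) 1 p)) 0 = shift (init_config s j.+1 p).
Proof.
move=> ep; set pi := lift_perm p0 j s; set t := behead _.
have [_ _ st _] := t_facts pi p.
rewrite /stateW /shift; congr (_ :: _).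
apply: (@eq_from_nth _ 0); first by rewrite !size_map st size_iota.
move=> c; rewrite size_map st => hc.
rewrite (nth_map 0) ?st // (nth_map 0) ?size_init //.
pose c' : 'I_m.+1 := Ordinal hc.
pose k := (pi^-1)%g c'.
have ec : c = pi k by rewrite /k permKV.
rewrite [in t`_c]ec nth_t /wf.
case: (unliftP p0 k) => [i ek|ek].
- have ec2 : c = lift j (s i) by rewrite ec ek /pi lift_perm_lift.
  have hch : c = (chip_at s j.+1 i).-1.
    by rewrite ec2 /chip_at /= /bump; case: ifP => h; case: leqP => h'; lia.
  have e0 : (p0 : nat) = p := ep.
  rewrite hch nth_init_chip ek /= /bump e0.
  case: leqP => h; [change (nat_of_bool true) with 1%N|change (nat_of_bool false) with 0%N]; case: ifP => h2; lia.
- have ec2 : c = j by rewrite ec ek /pi lift_perm_id.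
  rewrite ec2 -[val j]/(j.+1.-1) nth_init_r; last by have := ltn_ord j; lia.
  have e0 : (p0 : nat) = p := ep.
  by rewrite ek e0; case: ifP => h; lia.
Qed.

Lemma key2 m p (p0 j : 'I_m.+1) (s : 'S_m) : val p0 = p -> (1 <= p)%N ->
  (lift_perm p0 j s \in Tset m.+1 1 p) = (s \in Tset m j.+1 p).
Proof.
move=> ep hp.
have hpm : (p <= m)%N by rewrite -ep -ltnS ltn_ord.
set pi := lift_perm p0 j s.
set S := init_config pi 1 p; set t := behead S.
set D := init_config s j.+1 p.
have [Pt ut st mt] := t_facts pi p.
have hS : S = p%:Z :: t by rewrite /t /S -init_head.
have hW : reach S (shift D).
  rewrite -(wave_shift j s ep) hS; apply: wave => // k hk.
  by rewrite mt; lia.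
have IS : Inv S by apply: Inv_perm (@perm_init _ pi 1 p _) (Inv_pu _ _).
have BD : Bnd D.
  apply: Bnd_perm (@perm_init _ s j.+1 p _) (Bnd_pu _ hp); have := ltn_ord j; lia.
rewrite !Tset_mem; apply/asboolP/asboolP.
- move=> [Y [SY [stY srY]]].
  have [Z [YZ WZ]] := confl IS SY hW.
  have eZ := stable_reach stY YZ.
  subst Z.
  have [X [DX eY]] := reach_unshift BD WZ.
  exists X; split => //; subst Y; split.
    exact: uniq_unshift stY.
  exact: sorted_unshift srY.
- move=> [X [DX [stX srX]]].
  have BX := Bnd_reach BD DX.
  exists (shift X); split; first exact: rt_trans hW (reach_shift DX).
  split; [apply: uniq_shift|apply: sorted_shift] => //; exact: Bnd_pos.
Qed.

Lemma key1 n (pi : 'S_n) : (1 <= n)%N -> (pi \in Tset n 1 n) = (pi == 1%g).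
Proof.
move=> hn.
set S := init_config pi 1 n; set t := behead S.
have [Pt ut st mt] := t_facts pi n.
have hS : S = n%:Z :: t by rewrite /t /S -init_head.
have tpos y : y \in t -> 0 <= y by rewrite mt; lia.
have eW : stateW n t 0 = shift t.
  rewrite /stateW /shift; congr (_ :: _); apply/eq_in_map => y.
  by rewrite mt /wf => h; rewrite ifT //; apply/andP; lia.
have hW : reach S (shift t).
  rewrite -eW hS; apply: wave => // k hk; rewrite mt; lia.
have stW : stable (shift t) by apply: uniq_shift.
have IS : Inv S by apply: Inv_perm (@perm_init _ pi 1 n _) (Inv_pu _ _).
have tu : (t == useq n) = (pi == 1%g).
  apply/eqP/eqP => [e|e1].
    apply/permP => k; apply: val_inj; rewrite perm1.
    have := nth_t pi n k; rewrite -/S -/t e nth_useq //.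
    by move=> /eqP; rewrite eqz_nat eqSS => /eqP.
  apply: (@eq_from_nth _ 0); first by rewrite st size_useq.
  move=> c; rewrite st => hc.
  have h := nth_t pi n (Ordinal hc).
  have e2 : pi (Ordinal hc) = Ordinal hc by rewrite e1 perm1.
  by rewrite e2 /= in h; rewrite h nth_useq.
have su : sorted <%R (useq n).
  rewrite /useq sorted_map; apply: sub_sorted (iota_ltn_sorted 0 n) => x y /=; lia.
rewrite Tset_mem -tu; apply/asboolP/eqP.
- move=> [Y [SY [stY srY]]].
  have eY := final_unique IS SY hW stY stW.
  subst Y.
  apply: (irr_sorted_eq lt_trans ltxx (sorted_unshift srY) su).
  by move=> y; rewrite (perm_mem Pt).
- move=> e; exists (shift t); split => //; split => //.
  by apply: sorted_shift => //; rewrite e.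
Qed.

Local Close Scope ring_scope.


Lemma card_sum (T : finType) (A : {set T}) : #|A| = (\sum_(x : T) (x \in A : nat))%N.
Proof. by rewrite -sum1_card big_mkcond /=; apply: eq_bigr => x _; case: (x \in A). Qed.

Lemma count2 m p : (1 <= p <= m)%N ->
  #|Tset m.+1 1 p| = (\sum_(j < m.+1) #|Tset m j.+1 p|)%N.
Proof.
move=> /andP [hp1 hpm].
have hp : (p < m.+1)%N by lia.
pose p0 : 'I_m.+1 := Ordinal hp.
pose f (x : 'I_m.+1 * 'S_m) : 'S_m.+1 := lift_perm p0 x.1 x.2.
have finj : injective f.
  move=> [j s] [j' s']; rewrite /f /= => e.
  have ej : j = j' by have := lift_perm_id p0 j s; rewrite e lift_perm_id.
  subst j'; congr (_, _); apply/permP => k.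
  have := lift_perm_lift p0 j s k; rewrite e lift_perm_lift => /lift_inj -> //.
have fonto y : y \in codom f.
  have hc : (#|{: 'S_m.+1}| <= #|{: 'I_m.+1 * 'S_m}|)%N.
    by rewrite card_prod card_ord !card_Sn factS.
  exact: inj_card_onto finj hc y.
pose A := [set x : 'I_m.+1 * 'S_m | x.2 \in Tset m x.1.+1 p].
have -> : Tset m.+1 1 p = f @: A.
  apply/setP => y; apply/idP/imsetP.
    move=> hy; have /codomP [x ex] := fonto y.
    exists x => //; rewrite inE -(key2 x.1 x.2 (erefl : val p0 = p) hp1).
    by rewrite /f in ex; rewrite -ex.
  move=> [x]; rewrite inE => hx ->.
  by rewrite /f (key2 x.1 x.2 (erefl : val p0 = p) hp1).
rewrite card_imset //.
rewrite card_sum.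
rewrite (eq_bigr (fun j : 'I_m.+1 => \sum_(s : 'S_m) (s \in Tset m j.+1 p : nat))%N); last by move=> j _; rewrite card_sum.
rewrite pair_big /=.
by apply: eq_bigr => [[j s]] _; rewrite inE.
Qed.

Theorem proposition4p6 :
  (forall n : nat, (1 <= n)%N -> #|Tset n 1 n| = 1%N) /\
  (forall n p : nat, (2 <= n)%N -> (1 <= p <= n.-1)%N ->
     #|Tset n 1 p| = (\sum_(1 <= r < n.+1) #|Tset n.-1 r p|)%N).
Proof.
split.
  move=> n hn.
  have -> : Tset n 1 n = [set 1%g] by apply/setP => pi; rewrite in_set1 key1.
  exact: cards1.
move=> [|m] p // hm hp.
rewrite count2 //= big_add1 /= big_mkord //.
Qed.
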